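(* The probability that the greedy random walk on $\mathbb{Z}^2$ with rule $\mathcal{R}_{\mathrm{RAND}}$, started at the origin, returns to the origin at least once equals the probability that the particle in the planar mirror model, started at the origin with a uniformly random initial direction, returns to the origin.
   Context: A greedy random walk (GRW) on a connected locally finite graph $G=(V,E)$ started at $v_0$: $X_0=v_0$; with $H_t=\{\{X_{s-1},X_s\}:0<s\le t\}$ and $J_t(v)=\{e\in E: v\in e, e\notin H_t\}$, if $J_t(X_t)\ne\emptyset$ then $X_{t+1}$ is chosen by the rule $\mathcal{R}_{\mathrm{RAND}}$: uniformly at random among the endpoints (other than $X_t$) of the edges in $J_t(X_t)$; if $J_t(X_t)=\emptyset$ then $X_{t+1}$ is a uniformly random neighbor of $X_t$. Planar mirror model: independently at each vertex of $\mathbb{Z}^2$, place a two-sided mirror along one of the two diagonal directions (each with probability $1/3$), or no mirror (probability $1/3$). A particle moves along the edges of $\mathbb{Z}^2$ one unit per step; at a vertex with no mirror it continues straight, and at a vertex with a mirror it is deflected by the law of reflection (turning left or right by $90^\circ$ according to the mirror's orientation). *)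

(* Defs.v *)
(* No measure theory is available, so the
   probability of "returns to the origin at least once" is expressed as the
   limit of the (finitely computable) probabilities of "returns to the origin
   at some time 1 <= t <= n", n -> infinity (continuity from below of the
   probability measure along the increasing events). *)
From Stdlib Require Import Reals ZArith List Bool.
Import ListNotations.
Open Scope R_scope.

Definition pt := (Z * Z)%type.
Definition origin : pt := (0%Z, 0%Z).
Definition pt_eqb (p q : pt) : bool := (Z.eqb (fst p) (fst q) && Z.eqb (snd p) (snd q))%bool.

Definition nbrs (x : pt) : list pt :=
  [ ((fst x + 1)%Z, snd x); ((fst x - 1)%Z, snd x);
    (fst x, (snd x + 1)%Z); (fst x, (snd x - 1)%Z) ].

Definition avg (l : list R) : R := fold_right Rplus 0 l / INR (length l).

(* history H_t: list of traversed edges, stored as ordered pairs but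
   compared as unordered edges *)
Definition edge_used (H : list (pt * pt)) (x y : pt) : bool :=
  existsb (fun e => (pt_eqb (fst e) x && pt_eqb (snd e) y)
                    || (pt_eqb (fst e) y && pt_eqb (snd e) x))%bool H.

(* In Z^2 distinct edges at x have distinct other endpoints, so uniform over
   this list is the rule R_RAND. *)
Definition grw_cands (H : list (pt * pt)) (x : pt) : list pt :=
  match filter (fun y => negb (edge_used H x y)) (nbrs x) with
  | [] => nbrs x
  | u => u
  end.

Fixpoint grw_ret (n : nat) (x : pt) (H : list (pt * pt)) : R :=
  match n with
  | O => 0
  | S k => avg (map (fun y => if pt_eqb y origin then 1
                             else grw_ret k y ((x, y) :: H))
                    (grw_cands H x))
  end.

Definition grw_return_by (n : nat) : R := grw_ret n origin [].

Inductive mirror := NoMirror | Slash | Backslash.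

(* new direction after arriving at a vertex with the given mirror
   (law of reflection for mirrors along the diagonals y = x and y = -x) *)
Definition reflect (m : mirror) (d : pt) : pt :=
  match m with
  | NoMirror => d
  | Slash => (snd d, fst d)
  | Backslash => ((- snd d)%Z, (- fst d)%Z)
  end.

Definition directions : list pt := nbrs origin.

Fixpoint mirror_returns (w : pt -> mirror) (n : nat) (p d : pt) : bool :=
  match n with
  | O => false
  | S k => let p' := ((fst p + fst d)%Z, (snd p + snd d)%Z) in
           (pt_eqb p' origin || mirror_returns w k p' (reflect (w p') d))%bool
  end.

Definition upd (w : pt -> mirror) (v : pt) (m : mirror) : pt -> mirror :=
  fun q => if pt_eqb q v then m else w q.

(* expectation of F over i.i.d. uniform mirrors (each of the 3 states w.p. 1/3)
   at the vertices of L (L without duplicates); other vertices: NoMirror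
   (irrelevant when F only depends on the vertices of L) *)
Fixpoint mirror_exp (L : list pt) (F : (pt -> mirror) -> R) : R :=
  match L with
  | [] => F (fun _ => NoMirror)
  | v :: L' => / 3 * (mirror_exp L' (fun w => F (upd w v NoMirror))
                     + mirror_exp L' (fun w => F (upd w v Slash))
                     + mirror_exp L' (fun w => F (upd w v Backslash)))
  end.

Definition zrange (n : nat) : list Z :=
  map (fun k => (Z.of_nat k - Z.of_nat n)%Z) (seq 0 (2 * n + 1)).

(* the box [-n,n]^2, containing every vertex reachable in n steps *)
Definition box (n : nat) : list pt := list_prod (zrange n) (zrange n).

Definition mirror_return_by (n : nat) : R :=
  avg (map (fun d => mirror_exp (box n)
              (fun w => if mirror_returns w n origin d then 1 else 0))
           directions).

(* Main.v *)
Require Import Defs.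
From Stdlib Require Import Reals Lra Lia ZArith List Bool FunctionalExtensionality.
Import ListNotations.
Open Scope R_scope.

Lemma pt_eqb_iff p q : pt_eqb p q = true <-> p = q.
Proof.
  destruct p as [a b], q as [c d]; unfold pt_eqb; simpl.
  rewrite andb_true_iff, !Z.eqb_eq. split; [intros [-> ->]; auto | intros H; inversion H; auto].
Qed.

Lemma pt_eqb_spec p q : reflect (p = q) (pt_eqb p q).
Proof. apply iff_reflect; symmetry; apply pt_eqb_iff. Qed.

Lemma pt_eqb_refl p : pt_eqb p p = true.
Proof. apply pt_eqb_iff; auto. Qed.

Lemma mirror_exp_ext L F G : (forall w, F w = G w) -> mirror_exp L F = mirror_exp L G.
Proof.
  revert F G; induction L as [|v L IH]; intros F G H; simpl; auto.
  f_equal; f_equal; [f_equal|]; apply IH; auto.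
Qed.

Lemma mirror_exp_const L c : mirror_exp L (fun _ => c) = c.
Proof. induction L; simpl; auto. rewrite IHL. field. Qed.

Lemma upd_upd w v a m : upd (upd w v a) v m = upd w v m.
Proof. extensionality q; unfold upd; destruct (pt_eqb q v); auto. Qed.

Lemma upd_comm w u v a m : u <> v -> upd (upd w u a) v m = upd (upd w v m) u a.
Proof.
  intros Huv; extensionality q; unfold upd.
  destruct (pt_eqb_spec q v), (pt_eqb_spec q u); subst; auto; congruence.
Qed.

Lemma mirror_exp_extract L v F : In v L ->
  mirror_exp L F = / 3 * (mirror_exp L (fun w => F (upd w v NoMirror))
     + mirror_exp L (fun w => F (upd w v Slash)) + mirror_exp L (fun w => F (upd w v Backslash))).
Proof.
  revert F; induction L as [|u L IH]; intros F Hin; [destruct Hin|].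
  destruct (pt_eqb_spec u v) as [<-|Huv].
  - simpl.
    assert (E : forall m, mirror_exp L (fun w => F (upd (upd w u NoMirror) u m)) = mirror_exp L (fun w => F (upd w u m))
      /\ mirror_exp L (fun w => F (upd (upd w u Slash) u m)) = mirror_exp L (fun w => F (upd w u m))
      /\ mirror_exp L (fun w => F (upd (upd w u Backslash) u m)) = mirror_exp L (fun w => F (upd w u m))).
    { intros m; split; [|split]; apply mirror_exp_ext; intros; rewrite upd_upd; auto. }
    destruct (E NoMirror) as [A1 [A2 A3]]; destruct (E Slash) as [B1 [B2 B3]]; destruct (E Backslash) as [C1 [C2 C3]].
    rewrite A1, A2, A3, B1, B2, B3, C1, C2, C3. field.
  - destruct Hin as [Hin|Hin]; [congruence|]. simpl.
    rewrite (IH (fun w => F (upd w u NoMirror)) Hin), (IH (fun w => F (upd w u Slash)) Hin),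
      (IH (fun w => F (upd w u Backslash)) Hin).
    assert (E : forall a m, mirror_exp L (fun w => F (upd (upd w v m) u a)) = mirror_exp L (fun w => F (upd (upd w u a) v m))).
    { intros a m; apply mirror_exp_ext; intros; rewrite upd_comm; auto. }
    rewrite !E. field.
Qed.

Inductive dir := DE | DW | DN | DS.
Definition vec (a : dir) : pt := match a with
  | DE => (1%Z, 0%Z) | DW => ((-1)%Z, 0%Z) | DN => (0%Z, 1%Z) | DS => (0%Z, (-1)%Z) end.
Definition opp (a : dir) : dir := match a with DE => DW | DW => DE | DN => DS | DS => DN end.
Definition rfl (m : mirror) (a : dir) : dir := match m with
  | NoMirror => a
  | Slash => match a with DE => DN | DN => DE | DW => DS | DS => DW end
  | Backslash => match a with DE => DS | DS => DE | DW => DN | DN => DW end end.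
Definition pr m a := rfl m (opp a).
Definition dir_eqb (a b : dir) : bool := match a, b with
  | DE, DE | DW, DW | DN, DN | DS, DS => true | _, _ => false end.

Lemma reflect_vec m a : Defs.reflect m (vec a) = vec (rfl m a).
Proof. destruct m, a; reflexivity. Qed.

Definition vadd (p a : pt) : pt := ((fst p + fst a)%Z, (snd p + snd a)%Z).

Fixpoint lookup (fx : list (pt * mirror)) (v : pt) : option mirror :=
  match fx with [] => None | (u, m) :: f => if pt_eqb v u then Some m else lookup f v end.

Definition ov (w : pt -> mirror) fx q := match lookup fx q with Some m => m | None => w q end.

Fixpoint mrB (k : nat) (fx : list (pt * mirror)) (x : pt) (d : dir) : R :=
  match k with
  | O => 0
  | S k' =>
    let step fx' e := if pt_eqb (vadd x (vec e)) origin then 1 else mrB k' fx' (vadd x (vec e)) e in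
    match lookup fx x with
    | Some m => step fx (rfl m d)
    | None => / 3 * (step ((x, NoMirror) :: fx) (rfl NoMirror d) + step ((x, Slash) :: fx) (rfl Slash d)
                    + step ((x, Backslash) :: fx) (rfl Backslash d))
    end
  end.

Definition RA (k : nat) fx p e : R :=
  match k with O => 0 | S k' => if pt_eqb (vadd p (vec e)) origin then 1 else mrB k' fx (vadd p (vec e)) e end.

Lemma mrB_RA k fx x d : mrB k fx x d = match lookup fx x with
    | Some m => RA k fx x (rfl m d)
    | None => / 3 * (RA k ((x, NoMirror) :: fx) x (rfl NoMirror d) + RA k ((x, Slash) :: fx) x (rfl Slash d)
                    + RA k ((x, Backslash) :: fx) x (rfl Backslash d)) end.
Proof. destruct k; simpl; destruct (lookup fx x); auto; field. Qed.

Definition dist (p q : pt) : Z := (Z.abs (fst q - fst p) + Z.abs (snd q - snd p))%Z.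

Definition cond (k : nat) (p : pt) fx (L : list pt) :=
  forall q, (dist p q < Z.of_nat k)%Z -> lookup fx q = None -> In q L.

Lemma claimA k : forall fx p e L, cond k p fx L ->
  mirror_exp L (fun w => if mirror_returns (ov w fx) k p (vec e) then 1 else 0) = RA k fx p e.
Proof.
  induction k as [|k IH]; intros fx p e L Hc.
  - simpl. apply mirror_exp_const.
  - simpl mirror_returns. unfold RA. fold (vadd p (vec e)).
    set (p' := vadd p (vec e)).
    destruct (pt_eqb p' origin) eqn:Ho.
    + simpl orb. apply mirror_exp_const.
    + simpl orb.
      destruct k as [|k].
      * simpl. apply mirror_exp_const.
      * rewrite mrB_RA.
        assert (Hd : forall q, (dist p q <= dist p' q + 1)%Z).
        { intros q; unfold dist, p', vadd; destruct e; simpl; lia. }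
        destruct (lookup fx p') as [m|] eqn:Hl.
        -- rewrite <- (IH fx p' (rfl m e) L).
           ++ apply mirror_exp_ext; intros w. unfold ov at 2. rewrite Hl, reflect_vec. reflexivity.
           ++ intros q Hq Hn. apply Hc; auto. specialize (Hd q). rewrite ?Nat2Z.inj_succ in *. lia.
        -- assert (Hin : In p' L).
           { apply Hc; auto. unfold dist, p', vadd; destruct e; simpl; lia. }
           rewrite (mirror_exp_extract L p' _ Hin).
           assert (Hov : forall w m, ov (upd w p' m) fx = ov w ((p', m) :: fx)).
           { intros w m; extensionality q; unfold ov, upd; simpl.
             destruct (pt_eqb_spec q p'); subst.
             - rewrite Hl. auto.
             - destruct (lookup fx q); auto. }
           assert (Hc' : forall m, cond (S k) p' ((p', m) :: fx) L).
           { intros m q Hq Hn. simpl in Hn. destruct (pt_eqb q p'); [discriminate|].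
             apply Hc; auto. specialize (Hd q). rewrite ?Nat2Z.inj_succ in *. lia. }
           rewrite <- (IH _ p' (rfl NoMirror e) L (Hc' NoMirror)), <- (IH _ p' (rfl Slash e) L (Hc' Slash)),
             <- (IH _ p' (rfl Backslash e) L (Hc' Backslash)).
           f_equal; f_equal; [f_equal|]; apply mirror_exp_ext; intros w; rewrite Hov;
             unfold ov at 2; simpl; rewrite pt_eqb_refl, reflect_vec; reflexivity.
Qed.

Ltac clean_imps :=
  repeat match goal with
  | H : ?a <> ?b -> _ |- _ => first [specialize (H ltac:(discriminate)) | clear H]
  end.

Ltac brute u :=
  simpl in *; repeat match goal with H : context [u _] |- _ => revert H end;
  destruct (u DE), (u DW), (u DN), (u DS); simpl; intros; try discriminate; try congruence; auto.

Lemma L1 (u : dir -> bool) d m : u (opp d) = true -> u (pr m (opp d)) = false ->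
  (forall a, a <> opp d -> a <> pr m (opp d) -> u a = u (pr m a)) ->
  (exists a, a <> opp d /\ u a = true) -> forall a, u a = negb (dir_eqb a (rfl m d)).
Proof.
  intros H1 H2 H3 [a0 [Ha0 H4]] a.
  pose proof (H3 DE) as C1; pose proof (H3 DW) as C2; pose proof (H3 DN) as C3; pose proof (H3 DS) as C4; clear H3.
  destruct d, m; simpl in *; clean_imps; destruct a0; clean_imps; try congruence; destruct a; brute u.
Qed.

Lemma L2 (u : dir -> bool) d m : u (opp d) = true -> (forall a, a <> opp d -> u a = false) ->
  (forall a, dir_eqb a (rfl m d) || u a = dir_eqb (pr m a) (rfl m d) || u (pr m a)) /\
  exists a, dir_eqb a (rfl m d) || u a = true.
Proof.
  intros H1 H3.
  pose proof (H3 DE) as C1; pose proof (H3 DW) as C2; pose proof (H3 DN) as C3; pose proof (H3 DS) as C4; clear H3.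
  split; [intros a|exists (opp d)]; destruct d, m; simpl in *; clean_imps; try (destruct a); brute u.
Qed.

Lemma L3 (u : dir -> bool) d m : u (opp d) = true -> u (pr m (opp d)) = false ->
  (forall a, a <> opp d -> a <> pr m (opp d) -> u a = u (pr m a)) ->
  (exists a, a <> opp d /\ u a = true) ->
  (forall a, dir_eqb a (rfl m d) || u a = dir_eqb (pr m a) (rfl m d) || u (pr m a)) /\
  exists a, dir_eqb a (rfl m d) || u a = true.
Proof.
  intros H1 H2 H3 _.
  pose proof (H3 DE) as C1; pose proof (H3 DW) as C2; pose proof (H3 DN) as C3; pose proof (H3 DS) as C4; clear H3.
  split; [intros a|exists (opp d)]; destruct d, m; simpl in *; clean_imps; try (destruct a); brute u.
Qed.

Lemma L4 (u : dir -> bool) e : (forall a, u a = false) ->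
  dir_eqb (opp e) (opp e) || u (opp e) = true /\ forall a, a <> opp e -> dir_eqb a (opp e) || u a = false.
Proof.
  intros H. split. destruct e; reflexivity. intros a Ha; rewrite H; destruct a, e; simpl in *; congruence.
Qed.

Lemma L5 (u : dir -> bool) e m : (forall a, u a = u (pr m a)) -> (exists a, u a = true) -> u (opp e) = false ->
  let u' := fun a => dir_eqb a (opp e) || u a in
  u' (opp e) = true /\ u' (pr m (opp e)) = false /\
  (forall a, a <> opp e -> a <> pr m (opp e) -> u' a = u' (pr m a)) /\
  exists a, a <> opp e /\ u' a = true.
Proof.
  intros H3 [a0 H4] H2 u'. unfold u'.
  pose proof (H3 DE) as C1; pose proof (H3 DW) as C2; pose proof (H3 DN) as C3; pose proof (H3 DS) as C4; clear H3.
  split; [|split; [|split]].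
  - destruct e; reflexivity.
  - destruct e, m; simpl in *; brute u.
  - intros a. destruct e, m, a; simpl in *; clean_imps; intros; brute u.
  - exists a0. destruct e, m, a0; simpl in *; brute u; split; auto; discriminate.
Qed.

Definition U H v a := edge_used H v (vadd v (vec a)).

Lemma edge_used_sym H x y : edge_used H x y = edge_used H y x.
Proof.
  induction H as [|e H IH]; simpl; auto. rewrite IH. f_equal. apply orb_comm.
Qed.

Ltac ptsolve :=
  match goal with |- context [pt_eqb ?p ?q] =>
    destruct (pt_eqb_spec p q) as [Hq|Hq]; unfold vadd in *; simpl in *;
    [ try (inversion Hq; lia) | try (exfalso; apply Hq; f_equal; lia) ]; auto
  end.

Lemma vadd_inj x a b : pt_eqb (vadd x (vec a)) (vadd x (vec b)) = dir_eqb a b.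
Proof. destruct x, a, b; ptsolve. Qed.

Lemma vadd_back x e a : pt_eqb x (vadd (vadd x (vec e)) (vec a)) = dir_eqb a (opp e).
Proof. destruct x, e, a; ptsolve. Qed.

Lemma vadd_opp x e : vadd (vadd x (vec e)) (vec (opp e)) = x.
Proof. destruct x, e; unfold vadd; simpl; f_equal; lia. Qed.

Lemma vadd_ne x e : vadd x (vec e) <> x.
Proof. destruct x, e; unfold vadd; simpl; intros H; inversion H; lia. Qed.

Lemma pt_neq_false p q : p <> q -> pt_eqb p q = false.
Proof. intros H; destruct (pt_eqb_spec p q); congruence. Qed.

Lemma dir_eqb_refl a : dir_eqb a a = true.
Proof. destruct a; reflexivity. Qed.

Lemma dir_eqb_sym a b : dir_eqb a b = dir_eqb b a.
Proof. destruct a, b; reflexivity. Qed.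

Lemma U_cons H x e v a :
  U ((x, vadd x (vec e)) :: H) v a =
  (pt_eqb v x && dir_eqb a e) || (pt_eqb v (vadd x (vec e)) && dir_eqb a (opp e)) || U H v a.
Proof.
  unfold U, edge_used. simpl existsb. fold (edge_used H v (vadd v (vec a))).
  simpl fst; simpl snd. f_equal.
  destruct (pt_eqb_spec v x) as [->|Hvx].
  - rewrite pt_eqb_refl, vadd_inj, dir_eqb_sym. simpl.
    assert (pt_eqb x (vadd x (vec a)) = false) as ->.
    { destruct (pt_eqb_spec x (vadd x (vec a))) as [E|]; auto. exfalso; apply (vadd_ne x a); auto. }
    assert (pt_eqb (vadd x (vec e)) x = false) as ->.
    { destruct (pt_eqb_spec (vadd x (vec e)) x) as [E|]; auto. exfalso; apply (vadd_ne x e); auto. }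
    rewrite !andb_false_r. rewrite !orb_false_r.
    assert (pt_eqb x (vadd x (vec e)) = false) as ->.
    { destruct (pt_eqb_spec x (vadd x (vec e))) as [E|]; auto. exfalso; apply (vadd_ne x e); auto. }
    simpl. rewrite orb_false_r. auto.
  - assert (pt_eqb x v = false) as ->. { destruct (pt_eqb_spec x v); auto; congruence. }
    simpl. destruct (pt_eqb_spec v (vadd x (vec e))) as [->|Hv].
    + rewrite vadd_back, pt_eqb_refl. simpl. rewrite andb_true_r. auto.
    + assert (pt_eqb (vadd x (vec e)) v = false) as ->. { destruct (pt_eqb_spec (vadd x (vec e)) v); auto; congruence. }
      rewrite andb_false_r. auto.
Qed.

Definition Inv H fx x d :=
  x <> origin /\ U H x (opp d) = true /\
  (forall v, v <> x -> v <> origin -> match lookup fx v with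
      | None => forall a, U H v a = false
      | Some m => (forall a, U H v a = U H v (pr m a)) /\ exists a, U H v a = true end) /\
  match lookup fx x with
  | None => forall a, a <> opp d -> U H x a = false
  | Some m => U H x (pr m (opp d)) = false /\
      (forall a, a <> opp d -> a <> pr m (opp d) -> U H x a = U H x (pr m a)) /\
      exists a, a <> opp d /\ U H x a = true
  end.

Lemma pr_opp_rfl m d : pr m (opp d) = rfl m d.
Proof. destruct m, d; reflexivity. Qed.

Lemma Inv_step H fx fx' x d m :
  Inv H fx x d -> lookup fx' x = Some m -> (forall v, v <> x -> lookup fx' v = lookup fx v) ->
  (lookup fx x = None \/ lookup fx x = Some m) ->
  vadd x (vec (rfl m d)) <> origin ->
  Inv ((x, vadd x (vec (rfl m d))) :: H) fx' (vadd x (vec (rfl m d))) (rfl m d).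
Proof.
  intros [Hx [Hopp [H3 H4]]] Hl' Hlv Hcase Hy.
  set (e := rfl m d) in *. set (y := vadd x (vec e)) in *.
  assert (Hyx : y <> x) by apply vadd_ne.
  assert (Ux : U ((x, y) :: H) x = fun a => dir_eqb a e || U H x a).
  { extensionality a. unfold y; rewrite U_cons, pt_eqb_refl.
    rewrite (pt_neq_false x (vadd x (vec e))) by (intros E; apply (vadd_ne x e); auto).
    simpl. destruct (dir_eqb a e); auto. }
  assert (Uy : U ((x, y) :: H) y = fun a => dir_eqb a (opp e) || U H y a).
  { extensionality a. unfold y; rewrite U_cons, pt_eqb_refl.
    rewrite (pt_neq_false (vadd x (vec e)) x) by (apply vadd_ne).
    simpl. auto. }
  assert (Uv : forall v a, v <> x -> v <> y -> U ((x, y) :: H) v a = U H v a).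
  { intros v a H1 H2. unfold y; rewrite U_cons.
    rewrite (pt_neq_false v x), (pt_neq_false v (vadd x (vec e))) by auto.
    auto. }
  assert (Hue : U H x e = false).
  { destruct Hcase as [Hc|Hc]; rewrite Hc in H4.
    - apply H4. unfold e; destruct m, d; discriminate.
    - destruct H4 as [H4 _]. rewrite pr_opp_rfl in H4. auto. }
  assert (Hyo : U H y (opp e) = false).
  { unfold U. unfold y at 2. rewrite vadd_opp, edge_used_sym. exact Hue. }
  split; [auto|split; [rewrite Uy, dir_eqb_refl; auto|split]].
  - intros v Hvy Hvo. destruct (pt_eqb_spec v x) as [->|Hvx].
    + rewrite Hl', Ux.
      destruct Hcase as [Hc|Hc]; rewrite Hc in H4.
      * destruct (L2 (U H x) d m Hopp H4) as [A B]. split.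
        -- intros a; apply A.
        -- exact B.
      * destruct H4 as [A1 [A2 A3]].
        destruct (L3 (U H x) d m Hopp A1 A2 A3) as [A B]. split.
        -- intros a; apply A.
        -- exact B.
    + rewrite Hlv by auto. specialize (H3 v Hvx Hvo).
      destruct (lookup fx v) as [m'|].
      * destruct H3 as [A [a B]]. split.
        -- intros a'; rewrite !Uv by auto; auto.
        -- exists a; rewrite Uv by auto; auto.
      * intros a; rewrite Uv by auto; auto.
  - rewrite Hlv by auto. specialize (H3 y Hyx Hy). rewrite Uy.
    destruct (lookup fx y) as [m'|].
    + destruct H3 as [A B]. pose proof (L5 (U H y) e m' A B Hyo) as P; simpl in P; apply P.
    + destruct (L4 (U H y) e H3) as [_ B]. exact B.
Qed.

Lemma nbrs_eq x : nbrs x = map (fun a => vadd x (vec a)) [DE; DW; DN; DS].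
Proof. destruct x as [p q]; unfold nbrs, vadd; simpl; repeat f_equal; lia. Qed.

Lemma filter_map_gen {A B} (p : B -> bool) (f : A -> B) l :
  filter p (map f l) = map f (filter (fun a => p (f a)) l).
Proof. induction l; simpl; auto. destruct (p (f a)); simpl; rewrite IHl; auto. Qed.

Lemma cands_eq H x p : (forall a, negb (U H x a) = p a) ->
  grw_cands H x = match filter p [DE; DW; DN; DS] with [] => nbrs x | _ => map (fun a => vadd x (vec a)) (filter p [DE; DW; DN; DS]) end.
Proof.
  intros Hp. unfold grw_cands. rewrite nbrs_eq, filter_map_gen.
  rewrite (filter_ext _ p) by exact Hp.
  destruct (filter p [DE; DW; DN; DS]); auto.
Qed.

Lemma avg1 a : avg [a] = a.
Proof. unfold avg; simpl. field. Qed.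

Lemma avg3 a b c : avg [a; b; c] = / 3 * (a + b + c).
Proof. unfold avg; simpl. field. Qed.

Lemma claimB k : forall H fx x d, Inv H fx x d -> grw_ret k x H = mrB k fx x d.
Proof.
  induction k as [|k IH]; intros H fx x d Hinv; [reflexivity|].
  rewrite mrB_RA.
  assert (Inv0 := Hinv). destruct Hinv as [Hx [Hopp [H3 H4]]].
  simpl grw_ret.
  set (g := fun y => if pt_eqb y origin then 1 else grw_ret k y ((x, y) :: H)).
  assert (T : forall fx' m, lookup fx' x = Some m -> (forall v, v <> x -> lookup fx' v = lookup fx v) ->
     (lookup fx x = None \/ lookup fx x = Some m) ->
     g (vadd x (vec (rfl m d))) = RA (S k) fx' x (rfl m d)).
  { intros fx' m A B C. unfold g, RA.
    destruct (pt_eqb (vadd x (vec (rfl m d))) origin) eqn:Eo; auto.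
    apply IH. apply Inv_step with fx; auto.
    intros E; rewrite E, pt_eqb_refl in Eo; discriminate. }
  destruct (lookup fx x) as [m|] eqn:Hl.
  - destruct H4 as [A1 [A2 A3]].
    assert (Hu := L1 (U H x) d m Hopp A1 A2 A3).
    rewrite (cands_eq H x (fun a => dir_eqb a (rfl m d))) by (intros a; rewrite Hu, negb_involutive; auto).
    assert (F : filter (fun a => dir_eqb a (rfl m d)) [DE; DW; DN; DS] = [rfl m d]) by (destruct m, d; reflexivity).
    rewrite F. simpl map. rewrite avg1. apply T; auto.
  - assert (Hu : forall a, negb (U H x a) = negb (dir_eqb a (opp d))).
    { intros a. destruct (dir_eqb a (opp d)) eqn:E.
      - destruct a, d; try discriminate E; simpl in *; rewrite Hopp; auto.
      - rewrite H4; auto. intros ->. rewrite dir_eqb_refl in E; discriminate. }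
    rewrite (cands_eq H x _ Hu).
    assert (Tm : forall m, g (vadd x (vec (rfl m d))) = RA (S k) ((x, m) :: fx) x (rfl m d)).
    { intros m; apply T; auto.
      - simpl. rewrite pt_eqb_refl; auto.
      - intros v Hv; simpl. rewrite pt_neq_false; auto. }
    pose proof (Tm NoMirror) as T1; pose proof (Tm Slash) as T2; pose proof (Tm Backslash) as T3.
    clearbody g. destruct d; simpl in T1, T2, T3 |- *; rewrite avg3, T1, T2, T3; ring.
Qed.

Lemma Inv_init a : Inv [(origin, vadd origin (vec a))] [] (vadd origin (vec a)) a.
Proof.
  assert (Hx : vadd origin (vec a) <> origin) by (destruct a; discriminate).
  split; [auto|split; [|split]].
  - rewrite U_cons, pt_eqb_refl, dir_eqb_refl. simpl. rewrite !orb_true_r. reflexivity.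
  - intros v H1 H2. cbn [lookup]. intros b. rewrite U_cons, !pt_neq_false by auto. reflexivity.
  - cbn [lookup]. intros b Hb. rewrite U_cons, pt_neq_false, pt_eqb_refl by auto. simpl.
    destruct a, b; simpl in *; try reflexivity; congruence.
Qed.

Lemma in_zrange n z : (Z.abs z < Z.of_nat n)%Z -> In z (zrange n).
Proof.
  intros H. unfold zrange. apply in_map_iff. exists (Z.to_nat (z + Z.of_nat n)). split.
  - rewrite Z2Nat.id by lia. lia.
  - apply in_seq. lia.
Qed.

Lemma cond_box n : cond n origin [] (box n).
Proof.
  intros [p q] Hd _. unfold dist, origin in Hd; cbn [fst snd] in Hd. unfold box. apply in_prod; apply in_zrange; lia.
Qed.

Lemma eq_n n : grw_return_by n = mirror_return_by n.
Proof.
  unfold grw_return_by, mirror_return_by. destruct n as [|n].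
  - simpl. unfold avg. simpl. field.
  - assert (C : grw_cands [] origin = directions) by reflexivity.
    cbn [grw_ret]. rewrite C. f_equal. apply map_ext_in. intros y Hy.
    unfold directions in Hy. rewrite nbrs_eq in Hy. apply in_map_iff in Hy. destruct Hy as [a [<- _]].
    rewrite <- (mirror_exp_ext _ (fun w => if mirror_returns (ov w []) (S n) origin (vec a) then 1 else 0)).
    2:{ intros w. replace (vadd origin (vec a)) with (vec a) by (destruct a; reflexivity). reflexivity. }
    rewrite claimA by apply cond_box. unfold RA.
    assert (E : pt_eqb (vadd origin (vec a)) origin = false) by (destruct a; reflexivity).
    rewrite E. apply claimB. apply Inv_init.
Qed.

Lemma sum_bounds l : Forall (fun r => 0 <= r <= 1) l -> 0 <= fold_right Rplus 0 l <= INR (length l).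
Proof.
  induction 1; cbn [fold_right length]; [simpl; lra|]. rewrite S_INR. lra.
Qed.

Lemma inv_len_nonneg n : 0 <= / INR n.
Proof.
  destruct n. simpl. rewrite Rinv_0; lra.
  left; apply Rinv_0_lt_compat, lt_0_INR; lia.
Qed.

Lemma avg_bounds l : Forall (fun r => 0 <= r <= 1) l -> 0 <= avg l <= 1.
Proof.
  intros H. destruct (sum_bounds l H) as [A B]. unfold avg, Rdiv.
  pose proof (inv_len_nonneg (length l)).
  destruct (length l) eqn:E.
  - simpl in *. rewrite Rinv_0. lra.
  - split. apply Rmult_le_pos; lra.
    assert (0 < INR (S n)) by (apply lt_0_INR; lia).
    apply (Rmult_le_reg_r (INR (S n))); auto. rewrite Rmult_assoc, Rinv_l by lra. lra.
Qed.

Lemma sum_mono {A} (f g : A -> R) l : (forall y, In y l -> f y <= g y) ->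
  fold_right Rplus 0 (map f l) <= fold_right Rplus 0 (map g l).
Proof.
  induction l; simpl; intros H; [lra|]. pose proof (H a (or_introl eq_refl)).
  assert (fold_right Rplus 0 (map f l) <= fold_right Rplus 0 (map g l)) by (apply IHl; auto). lra.
Qed.

Lemma avg_mono {A} (f g : A -> R) l : (forall y, In y l -> f y <= g y) -> avg (map f l) <= avg (map g l).
Proof.
  intros H. unfold avg, Rdiv. rewrite !length_map. apply Rmult_le_compat_r.
  apply inv_len_nonneg. apply sum_mono; auto.
Qed.

Lemma grw_bounds k : forall x H, 0 <= grw_ret k x H <= 1.
Proof.
  induction k; intros x H; simpl; [lra|]. apply avg_bounds.
  apply Forall_forall. intros r Hr. apply in_map_iff in Hr. destruct Hr as [y [<- _]].
  destruct (pt_eqb y origin); [lra|auto].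
Qed.

Lemma grw_mono k : forall x H, grw_ret k x H <= grw_ret (S k) x H.
Proof.
  induction k; intros x H.
  - apply grw_bounds.
  - simpl grw_ret at 1. change (grw_ret (S (S k)) x H) with
      (avg (map (fun y => if pt_eqb y origin then 1 else grw_ret (S k) y ((x, y) :: H)) (grw_cands H x))).
    apply avg_mono. intros y _. destruct (pt_eqb y origin); [lra|auto].
Qed.

Theorem mainTheorem14 :
  exists l : R, Un_cv grw_return_by l /\ Un_cv mirror_return_by l.
Proof.
  assert (Hg : Un_growing grw_return_by) by (intros n; apply grw_mono).
  assert (Hb : has_ub grw_return_by).
  { exists 1. intros r [i ->]. apply grw_bounds. }
  destruct (growing_cv _ Hg Hb) as [l Hl]. exists l. split; auto.
  replace mirror_return_by with grw_return_by; auto.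
  extensionality n; apply eq_n.
Qed.
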